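(* Let $r\ge 2$ and $n\ge 4$. For any vertex $(x,y)$ of $\mathcal{D}_{n-1}$ we have $$\pi_n\big(rx+(r-1)y\big)=\pi_{n-1}(x+y),$$ where $\pi_n$ and $\pi_{n-1}$ are as defined in the context.
   Context: Fix an integer $r\ge 2$. Define $c_1=0$, $c_2=1$, $c_n=rc_{n-1}-c_{n-2}$ for $n\ge 3$. For nonnegative integers $a,b$, the maximal Dyck path $\mathcal{P}(a,b)$ is the lattice path from $(0,0)$ to $(a,b)$ using unit north and east steps that never passes strictly above the line segment from $(0,0)$ to $(a,b)$ and is closest to that segment. For $n\ge 3$ let $\mathcal{D}_n=\mathcal{P}(c_{n-1}-c_{n-2},c_{n-2})$; it has $c_{n-1}$ steps, and its vertices are $w_0=(0,0),w_1,\dots,w_{c_{n-1}}$ in order, where $w_i$ is the endpoint of the first $i$ steps (so $w_i=(x,i-x)$ for some $x$). For $n\ge 3$ define $\pi_n:\{0,1,\dots,c_{n-1}\}\to\mathbb{Z}$ by $\pi_n(i)=xc_{n-2}-(i-x)(c_{n-1}-c_{n-2})$, where $w_i=(x,i-x)$ is the $i$-th vertex of $\mathcal{D}_n$. *)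

(* Defs.v *)
From mathcomp Require Import all_boot all_order all_algebra.
Set Implicit Arguments. Unset Strict Implicit. Unset Printing Implicit Defensive.
Import GRing.Theory Num.Theory.

(* The sequence c_1 = 0, c_2 = 1, c_k = r c_{k-1} - c_{k-2}.  For r >= 2 it is
   nonnegative and nondecreasing, so nat (truncated) subtraction is exact. *)
Fixpoint cpair (r k : nat) : nat * nat :=
  if k is k'.+1 then let p := cpair r k' in (p.2, r * p.2 - p.1) else (0, 1).

(* cseq r k = c_k for k >= 1 (cseq r 0 = 0 is junk). *)
Definition cseq (r k : nat) : nat := (cpair r k.-1).1.

(* Maximal Dyck path P(a,b), as a word: true = east step, false = north step.
   It is the lower Christoffel path: at abscissa k the path climbs up to
   height floor(b k / a), the highest lattice height not above the segment. *)
Definition dheight (a b k : nat) : nat := (b * k) %/ a.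

Definition dyck_word (a b : nat) : seq bool :=
  flatten [seq true :: nseq (dheight a b k.+1 - dheight a b k) false | k <- iota 0 a]
  ++ nseq (b - dheight a b a) false.

Definition vertex (w : seq bool) (i : nat) : nat * nat :=
  (count id (take i w), count negb (take i w)).

Definition Dpath (r n : nat) : seq bool :=
  dyck_word (cseq r n.-1 - cseq r n.-2) (cseq r n.-2).

Definition is_vertex (r n x y : nat) : Prop :=
  exists i, i <= cseq r n.-1 /\ vertex (Dpath r n) i = (x, y).

Definition pi_map (r n i : nat) : int :=
  let x := (vertex (Dpath r n) i).1 in
  (x * cseq r n.-2)%:Z - ((i - x) * (cseq r n.-1 - cseq r n.-2))%:Z.

(* Main.v *)
Require Import Defs.
From mathcomp Require Import all_boot all_order all_algebra zify ring.

Definition blk a b k := true :: nseq (dheight a b k.+1 - dheight a b k) false.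

Lemma dh_mono a b k : dheight a b k <= dheight a b k.+1.
Proof. by apply: leq_div2r; rewrite leq_mul2l leqnSn orbT. Qed.

Lemma dh_lo a b k : a * dheight a b k <= b * k.
Proof. by rewrite mulnC; apply: leq_divM. Qed.

Lemma dh_hi a b k : 0 < a -> b * k < a * dheight a b k + a.
Proof. move=> a0; have := ltn_ceil (b * k) a0; rewrite /dheight; lia. Qed.

Lemma prefix_inv a b : 0 < a -> forall n k0 j,
  let s := flatten [seq blk a b k | k <- iota k0 n] in
  let x := k0 + count id (take j s) in
  let y := dheight a b k0 + count negb (take j s) in
  a * y <= b * x < a * y + a + b.
Proof.
move=> a0; elim=> [|n IH] k0 j /=.
  rewrite /= ?take0 /= !addn0; have := dh_lo a b k0; have := @dh_hi a b k0 a0; lia.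
rewrite -cat_cons take_cat.
set d := dheight a b k0.+1 - dheight a b k0.
have hm := dh_mono a b k0.
have hd : dheight a b k0 + d = dheight a b k0.+1 by rewrite /d; lia.
case: ifP => hj.
  case: j hj => [|j] hj.
    rewrite take0 /= !addn0; have := dh_lo a b k0; have := @dh_hi a b k0 a0; lia.
  rewrite /= size_nseq ltnS in hj.
  rewrite /= take_nseq; last by lia.
  rewrite /= !count_nseq /= mul1n mul0n !add0n.
  have l1 := dh_lo a b k0.+1.
  have l2 := @dh_hi a b k0 a0.
  have e1 : a * (dheight a b k0 + j) <= a * dheight a b k0.+1 by rewrite leq_mul2l; apply/orP; right; lia.
  rewrite -addn1 !mulnDr muln1 in l1 e1 *.
  lia.
have := IH k0.+1 (j - size (true :: nseq d false)).
rewrite /= !count_cat /= !count_nseq /= mul1n ?mul0n ?addn0 ?add0n.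
set ci := count id _. set cn := count negb _.
have -> : dheight a b k0 + (d + cn) = dheight a b k0.+1 + cn by lia.
have -> : k0 + (1 + ci) = k0.+1 + ci by lia.
done.
Qed.

Lemma flat_counts a b n k0 :
  let s := flatten [seq blk a b k | k <- iota k0 n] in
  count id s = n /\ count negb s = dheight a b (k0 + n) - dheight a b k0.
Proof.
elim: n k0 => [|n IH] k0 /=; first by rewrite addn0 subnn.
have [h1 h2] := IH k0.+1.
rewrite !count_cat /= !count_nseq /= h1 h2 mul1n mul0n.
have m1 := dh_mono a b k0.
have m2 : dheight a b k0.+1 <= dheight a b (k0.+1 + n).
  by apply: leq_div2r; rewrite leq_mul2l leq_addr orbT.
rewrite -addSnnS; split; lia.
Qed.

Lemma count_id_negb (s : seq bool) : count id s + count negb s = size s.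
Proof. elim: s => //= -[] s IH /=; lia. Qed.

Lemma count_take_le (p : pred bool) (s : seq bool) i : count p (take i s) <= count p s.
Proof. by rewrite -{2}(cat_take_drop i s) count_cat leq_addr. Qed.

Lemma dyck_vertex a b i : 0 < a ->
  let x := (vertex (dyck_word a b) i).1 in
  let y := (vertex (dyck_word a b) i).2 in
  a * y <= b * x < a * y + a + b /\ x <= a /\ y <= b /\ (i <= a + b -> x + y = i).
Proof.
move=> a0.
have ha : dheight a b a = b by rewrite /dheight mulnK.
have h0 : dheight a b 0 = 0 by rewrite /dheight muln0 div0n.
rewrite /vertex /dyck_word ha subnn cats0 /=.
have H := @prefix_inv a b a0 a 0 i.
have [c1 c2] := flat_counts a b a 0.
move: H c1 c2; rewrite /blk /= h0 ha !add0n subn0.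
set s := flatten _; move=> H c1 c2.
have hs : size s = a + b by rewrite -count_id_negb c1 c2.
split; first exact H.
split; first by rewrite -c1 count_take_le.
split; first by rewrite -c2 count_take_le.
move=> hi; rewrite count_id_negb size_take hs.
case: ltnP => //; lia.
Qed.

Lemma cseq_rec r k : cseq r k.+3 = r * cseq r k.+2 - cseq r k.+1.
Proof. by []. Qed.

Lemma cseq_lt r k : 2 <= r -> cseq r k.+1 < cseq r k.+2.
Proof.
move=> r2; elim: k => [|k IH]; first by [].
rewrite cseq_rec.
have : 2 * cseq r k.+2 <= r * cseq r k.+2 by rewrite leq_mul2r r2 orbT.
lia.
Qed.

Theorem mainTheorem2 (r n x y : nat) :
  2 <= r -> 4 <= n -> is_vertex r n.-1 x y ->
  r * x + (r - 1) * y <= cseq r n.-1 /\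
  pi_map r n (r * x + (r - 1) * y) = pi_map r n.-1 (x + y).
Proof.
move=> r2; case: n => [|[|[|[|m]]]] // _ [j [hj hv]].
rewrite /= in hj hv *.
rewrite /pi_map /Dpath /=.
move: hv; rewrite /Dpath /=.
set A := cseq r m.+1; set B := cseq r m.+2; set C := cseq r m.+3.
have hAB : A < B by apply: cseq_lt.
have hBC : B < C by apply: cseq_lt.
have hC : C = r * B - A by [].
move=> hv.
have [h1 [h2 [h3 h4]]] := @dyck_vertex (B - A) A j ltac:(lia).
rewrite hv /= in h1 h2 h3 h4.
have hxy : x + y = j by apply: h4; lia.
have hrB : r * A <= r * B by rewrite leq_mul2l ltnW // orbT.
have hrA : A <= r * A by rewrite leq_pmull //; lia.
have part1 : r * x + (r - 1) * y <= C.
  have e1 : r * x <= r * (B - A) by rewrite leq_mul2l h2 orbT.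
  have e2 : (r - 1) * y <= (r - 1) * A by rewrite leq_mul2l h3 orbT.
  rewrite mulnBr in e1; rewrite mulnBl mul1n in e2.
  lia.
split; first exact: part1.
set i := r * x + (r - 1) * y.
have [g1 [g2 [g3 g4]]] := @dyck_vertex (C - B) B i ltac:(lia).
set X := (vertex _ i).1 in g1 g2 g3 g4 *.
set Y := (vertex _ i).2 in g1 g2 g3 g4 *.
have hXY : X + Y = i by apply: g4; lia.
have hx : count id (take (x + y) (dyck_word (B - A) A)) = x.
  by rewrite hxy; move: hv => /(congr1 fst).
rewrite hx -/X.
have -> : i - X = Y by lia.
have -> : x + y - x = y by lia.
have FC : ((C:int) = (r:int) * (B:int) - (A:int))%R.
  rewrite hC; lia.
have FX : ((X:int) = (r:int) * (x:int) + ((r:int) - 1) * (y:int) - (Y:int))%R.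
  move: hXY; rewrite /i; lia.
have hv1 : ((Y:int) * ((C:int) - (B:int)) <= (X:int) * (B:int))%R.
  move: g1; lia.
have hv2 : ((X:int) * (B:int) < (Y:int) * ((C:int) - (B:int)) + (C:int))%R.
  move: g1; lia.
have hw1 : ((y:int) * ((B:int) - (A:int)) <= (x:int) * (A:int))%R.
  move: h1; lia.
have hw2 : ((x:int) * (A:int) < (y:int) * ((B:int) - (A:int)) + (B:int))%R.
  move: h1; lia.
have key : ((X:int) * (B:int) - (Y:int) * ((C:int) - (B:int)) - ((x:int) * (A:int) - (y:int) * ((B:int) - (A:int)))
   = (C:int) * ((x:int) + (y:int) - (Y:int)))%R.
  rewrite FX FC; ring.
have Cpos : ((B:int) < (C:int))%R by rewrite ltz_nat.
have Bpos : ((0:int) <= (B:int))%R by [].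
move: key hv1 hv2 hw1 hw2 Cpos Bpos.
change (count id (take i (dyck_word (C - B) B))) with X.
set k := ((x:int) + (y:int) - (Y:int))%R.
move=> key hv1 hv2 hw1 hw2 Cpos Bpos.
have k0 : k = 0%R.
  have C0 : (0 <= (C:int))%R by [].
  have [k1|k1] : ((1 <= k)%R \/ (k <= 0)%R) by lia.
    have := @Num.Theory.mulr_ge0 _ (C:int) (k - 1)%R C0 ltac:(lia). lia.
  have [k2|k2] : ((k <= -1)%R \/ (k = 0)%R) by lia.
    have := @Num.Theory.mulr_ge0 _ (C:int) (- 1 - k)%R C0 ltac:(lia). lia.
  exact k2.
move: key; rewrite k0; lia.
Qed.
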